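(* Let $n\ge 1$ be an integer and $p\ge 3$ a prime. Let $S\subset(\mathbb{Z}_{\ge 0})^n\setminus\{0\}$ be a finite set with $|S|\le \frac12 p^n-1$ such that for every $\alpha=(\alpha_1,\dots,\alpha_n)\in S$ some coordinate $\alpha_i$ is not divisible by $p$. Let $r=\sqrt{\frac14(n-1)+\left(\frac{p-2}{2p}\right)^2}$. Then every multivariate trigonometric polynomial with spectrum $S$, i.e. every function $f\colon (S^1)^n\to\mathbb{R}$ of the form $$f(t_1,\dots,t_n)=\sum_{\alpha\in S}\Big(a_\alpha\cos\big(2\pi\textstyle\sum_i\alpha_it_i\big)+b_\alpha\sin\big(2\pi\textstyle\sum_i\alpha_it_i\big)\Big),\qquad a_\alpha,b_\alpha\in\mathbb{R},$$ has a zero on every closed geodesic ball of radius $r$ in $(S^1)^n$.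
   Context: $S^1=[0,1]/(0\sim1)$, and the torus $(S^1)^n$ is obtained from the cube $[0,1]^n$ by gluing opposite facets without a twist; it carries the quotient ($\ell_2$) metric inherited from the Euclidean metric on $[0,1]^n$, i.e. $\mathrm{dist}(s,t)=\big(\sum_i \min(|s_i-t_i|,1-|s_i-t_i|)^2\big)^{1/2}$ for representatives in $[0,1)$. A closed geodesic ball of radius $r$ is a set $\{y:\mathrm{dist}(x,y)\le r\}$. *)

(* Defs.v *)
From HB Require Import structures.
From mathcomp Require Import all_boot all_order all_algebra.
From mathcomp Require Import reals trigo.
Set Implicit Arguments. Unset Strict Implicit. Unset Printing Implicit Defensive.
Import Order.TTheory GRing.Theory Num.Theory.
Local Open Scope ring_scope.

(* Points of the torus (S^1)^n are represented by their representatives in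
   [0,1)^n. *)
Definition in_fund_domain (R : realType) (n : nat) (t : 'I_n -> R) : Prop :=
  forall i, 0 <= t i /\ t i < 1.

(* Quotient l2 metric on the torus (S^1)^n = [0,1]^n / ~ *)
Definition torus_dist (R : realType) (n : nat) (s t : 'I_n -> R) : R :=
  Num.sqrt (\sum_(i < n)
    (Num.min `|s i - t i| (1 - `|s i - t i|)) ^+ 2).

Definition trig_poly (R : realType) (n : nat) (S : seq (n.-tuple nat))
    (a b : n.-tuple nat -> R) (t : 'I_n -> R) : R :=
  \sum_(alpha <- S)
    (a alpha * cos (2 * pi * \sum_(i < n) (tnth alpha i)%:R * t i)
     + b alpha * sin (2 * pi * \sum_(i < n) (tnth alpha i)%:R * t i)).

(* Main.v *)
Require Import Defs.
From HB Require Import structures.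
From mathcomp Require Import all_boot all_order all_algebra.
From mathcomp Require Import reals trigo.
From mathcomp Require Import zify ring lra.
From mathcomp Require Import boolp topology normedtype.
Import Order.TTheory GRing.Theory Num.Theory numFieldNormedType.Exports.

Lemma negmod_lem p a g : (0 < p)%N -> (g < p)%N -> (p %| a + g)%N -> g = (p - a %% p) %% p.
Proof.
move=> h1 h2; rewrite /dvdn -modnDml -/(dvdn _ _).
have : (a %% p < p)%N by rewrite ltn_pmod.
move: (a %% p) => r hr /dvdnP [q hq].
case: r hr hq => [|r] hr hq.
  by rewrite subn0 modnn; case: q hq => [|q] hq; lia.
have q1 : q = 1%N by case: q hq => [|[|q]] hq; lia.
rewrite modn_small; lia.
Qed.

Lemma exists_gamma n p (S : seq (n.-tuple nat)) : (1 < p)%N ->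
  (2 * size S + 2 <= p ^ n)%N ->
  exists g : {ffun 'I_n -> 'I_p},
    (exists i, ~~ (p%:Z %| (g i)%:Z)%Z) /\
    forall al, al \in S ->
      (exists i, ~~ (p%:Z %| ((tnth al i)%:Z + (g i)%:Z)%R)%Z) /\
      (exists i, ~~ (p%:Z %| ((tnth al i)%:Z - (g i)%:Z)%R)%Z).
Proof.
move=> hp1 hc.
have p0 : (0 < p)%N by lia.
pose f0 := [ffun j : 'I_n => Ordinal p0].
pose f1 (al : n.-tuple nat) := [ffun j => Ordinal (ltn_pmod (tnth al j) p0)].
pose f2 (al : n.-tuple nat) := [ffun j => Ordinal (ltn_pmod (p - tnth al j %% p) p0)].
pose bad := f0 :: [seq f1 al | al <- S] ++ [seq f2 al | al <- S].
have [g hg] : exists g, g \notin bad.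
  case: (pickP (fun g => g \notin bad)) => [g hg|none]; first by exists g.
  have : (#|{ffun 'I_n -> 'I_p}| <= #|bad|)%N.
    apply: subset_leq_card; apply/subsetP => g _.
    by apply/negPn; rewrite none.
  rewrite card_ffun !card_ord => h; have := leq_trans h (card_size bad).
  rewrite /= size_cat !size_map; lia.
move: hg; rewrite in_cons mem_cat !negb_or => /and3P [g0 g1 g2].
exists g; split.
  case: (pickP (fun i => ~~ (p%:Z %| (g i)%:Z)%Z)) => [i hi | none]; first by exists i.
  exfalso; apply: (negP g0); apply/eqP/ffunP => i; rewrite ffunE; apply: val_inj => /=.
  have := none i; move/negbFE; change ((p %| g i)%N -> (g i : nat) = 0%N); rewrite /dvdn modn_small //; by move/eqP.
move=> al hal; split.
  case: (pickP (fun i => ~~ (p%:Z %| ((tnth al i)%:Z + (g i)%:Z)%R)%Z)) => [i hi | none]; first by exists i.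
  exfalso; apply: (negP g2); apply/mapP; exists al => //.
  apply/ffunP => i; rewrite ffunE; apply: val_inj => /=.
  have := none i; move/negbFE; rewrite -PoszD => h.
  by apply: negmod_lem.
case: (pickP (fun i => ~~ (p%:Z %| ((tnth al i)%:Z - (g i)%:Z)%R)%Z)) => [i hi | none]; first by exists i.
exfalso; apply: (negP g1); apply/mapP; exists al => //.
apply/ffunP => i; rewrite ffunE; apply: val_inj => /=.
have := none i; move/negbFE.
by rewrite -eqz_mod_dvd !modz_nat eqz_nat (modn_small (ltn_ord (g i))) => /eqP ->.
Qed.

Local Open Scope ring_scope.

Section Trig.
Variable R : realType.

Lemma cos_int (m : int) (x : R) : cos (x + m%:~R * (2 * pi)) = cos x.
Proof.
have H : forall k : nat, forall y : R, cos (y + k%:R * (2 * pi)) = cos y.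
  move=> k y; have := periodicn (@cosD2pi R) k y.
  have -> : k%:R * (2 * pi) = (pi *+ 2) *+ k :> R by rewrite -[pi *+ 2]mulr_natl -[_ *+ k]mulr_natl; ring.
  by [].
case: m => k.
- by rewrite -pmulrn H.
- rewrite NegzE mulrNz mulNr.
  by rewrite pmulrn; have := H k.+1 (x - k.+1%:R * (2 * pi)); rewrite subrK => ->.
Qed.

Lemma sin_int (m : int) (x : R) : sin (x + m%:~R * (2 * pi)) = sin x.
Proof.
have H : forall k : nat, forall y : R, sin (y + k%:R * (2 * pi)) = sin y.
  move=> k y; have := periodicn (@sinD2pi R) k y.
  have -> : k%:R * (2 * pi) = (pi *+ 2) *+ k :> R by rewrite -[pi *+ 2]mulr_natl -[_ *+ k]mulr_natl; ring.
  by [].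
case: m => k.
- by rewrite -pmulrn H.
- rewrite NegzE mulrNz mulNr.
  by rewrite pmulrn; have := H k.+1 (x - k.+1%:R * (2 * pi)); rewrite subrK => ->.
Qed.

Lemma cos_ne1 (r q : R) : 0 < r -> r < q -> cos (2 * pi * r / q) != 1.
Proof.
move=> r0 rq; have q0 : 0 < q by lra.
set t := pi * r / q.
have -> : 2 * pi * r / q = t + t by rewrite /t; field; lra.
rewrite cosD.
have st : 0 < sin t.
  apply: sin_gt0_pi; rewrite /t; apply/andP; split.
    by rewrite divr_gt0 // mulr_gt0 // pi_gt0.
  rewrite ltr_pdivrMr // ltr_pM2l //; exact: pi_gt0.
have := cos2Dsin2 t; rewrite !expr2 => h.
apply/eqP => e; nra.
Qed.
End Trig.


Section CS.
Variables (R : realType) (n p : nat).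
Hypothesis hp1 : (1 < p)%N.

Definition Ang (beta : 'I_n -> int) (k : {ffun 'I_n -> 'I_p}) : R :=
  2 * pi * \sum_(j < n) (beta j)%:~R * ((k j)%:R / p%:R).

Definition sh (i : 'I_n) (k : {ffun 'I_n -> 'I_p}) : {ffun 'I_n -> 'I_p} :=
  [ffun j => if j == i then ordS (k j) else k j].

Lemma sh_inj i : injective (sh i).
Proof.
move=> k k' /ffunP e; apply/ffunP => j; have := e j; rewrite !ffunE.
by case: eqP => _ //; apply: ordS_inj.
Qed.

Lemma Ang_sh beta i k : exists m : int,
  Ang beta (sh i k) = Ang beta k + 2 * pi * (beta i %% p)%Z%:~R / p%:R + m%:~R * (2 * pi).
Proof.
have p0 : (p%:R : R) != 0 by rewrite pnatr_eq0; case: p hp1.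
have hb : (beta i)%:~R = (beta i %/ p)%Z%:~R * p%:R + (beta i %% p)%Z%:~R :> R.
  by rewrite {1}(divz_eq (beta i) p) rmorphD rmorphM /=.
set q := (beta i %/ p)%Z in hb *; set r := (beta i %% p)%Z in hb *.
have E : forall k' : {ffun 'I_n -> 'I_p}, Ang beta k' =
   2 * pi * (\sum_(j < n | j != i) (beta j)%:~R * ((k' j)%:R / p%:R))
   + 2 * pi * ((beta i)%:~R * ((k' i)%:R / p%:R)).
  by move=> k'; rewrite /Ang (bigD1 i) //= mulrDr addrC.
have Eo : \sum_(j < n | j != i) (beta j)%:~R * (((sh i k) j)%:R / p%:R) =
          \sum_(j < n | j != i) (beta j)%:~R * ((k j)%:R / p%:R) :> R.
  by apply: eq_bigr => j /negbTE ji; rewrite ffunE ji.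
rewrite !E Eo ffunE eqxx /=.
have [lt|ge] := ltnP (k i).+1 p.
- exists (beta i %/ p)%Z; rewrite modn_small // hb.
  rewrite -natr1; field; exact: p0.
- have ki : (k i).+1 = p by apply/eqP; rewrite eqn_leq ge ltn_ord.
  exists (q - beta i); rewrite ki modnn [(q - _)%:~R]rmorphB /= hb.
  have -> : ((k i)%:R : R) = p%:R - 1 by apply/eqP; rewrite eq_sym subr_eq natr1 ki.
  field; exact: p0.
Qed.


Lemma CS beta i (hi : ~~ (p%:Z %| beta i)%Z) (th : R) :
  \sum_(k : {ffun 'I_n -> 'I_p}) cos (th + Ang beta k) = 0 /\
  \sum_(k : {ffun 'I_n -> 'I_p}) sin (th + Ang beta k) = 0.
Proof.
pose r := (beta i %% p)%Z.
pose ph : R := 2 * pi * r%:~R / p%:R.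
have p0 : (0 < p%:R :> R) by rewrite ltr0n; case: p hp1.
have r0 : (0 < r%:~R :> R).
  rewrite ltr0z lt_def modz_ge0 ?andbT; last by rewrite eqz_nat; case: p hp1.
  by apply/eqP => /dvdz_mod0P; apply/negP.
have rp : (r%:~R < p%:R :> R).
  have : (r < p%:Z)%R by apply: ltz_pmod; rewrite ltz_nat; case: p hp1.
  by rewrite -(ltr_int R) => /lt_le_trans; apply; rewrite -pmulrn.
have c1 : cos ph != 1 by apply: cos_ne1.
pose S := fun t => \sum_(k : {ffun 'I_n -> 'I_p}) cos (t + Ang beta k).
pose C := fun t => \sum_(k : {ffun 'I_n -> 'I_p}) sin (t + Ang beta k).
have shc : S th = S (th + ph).
  rewrite /S (reindex_inj (sh_inj i)); apply: eq_bigr => k _.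
  have [m ->] := Ang_sh beta i k.
  by rewrite -/r -/ph !addrA cos_int addrAC.
have shs : C th = C (th + ph).
  rewrite /C (reindex_inj (sh_inj i)); apply: eq_bigr => k _.
  have [m ->] := Ang_sh beta i k.
  by rewrite -/r -/ph !addrA sin_int addrAC.
have e1 : S (th + ph) = S th * cos ph - C th * sin ph.
  rewrite /S /C !mulr_suml -sumrB; apply: eq_bigr => k _.
  by rewrite -addrA (addrC ph) addrA (cosD (th + _) ph).
have e2 : C (th + ph) = C th * cos ph + S th * sin ph.
  rewrite /S /C !mulr_suml -big_split; apply: eq_bigr => k _.
  by rewrite -addrA (addrC ph) addrA (sinD (th + _) ph).
have cs := cos2Dsin2 ph.
move: shc shs; rewrite e1 e2 -/(S th) -/(C th).
move: (S th) (C th) (cos ph) (sin ph) c1 cs => Sv Cv c s c1 cs E1 E2.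
have hc : 2 - 2 * c != 0.
  apply: contra c1 => /eqP h; apply/eqP; lra.
have hS : (2 - 2 * c) * Sv = 0.
  have -> : (2 - 2 * c) * Sv = (1 - c) * ((1 - c) * Sv + s * Cv) - s * ((1 - c) * Cv - s * Sv)
     - (c ^+ 2 + s ^+ 2 - 1) * Sv by ring.
  rewrite cs subrr mul0r subr0.
  have -> : (1 - c) * Sv + s * Cv = 0 by rewrite mulrBl mul1r {1}E1; ring.
  have -> : (1 - c) * Cv - s * Sv = 0 by rewrite mulrBl mul1r {1}E2; ring.
  by rewrite !mulr0 subr0.
have hC : (2 - 2 * c) * Cv = 0.
  have -> : (2 - 2 * c) * Cv = (1 - c) * ((1 - c) * Cv - s * Sv) + s * ((1 - c) * Sv + s * Cv)
     - (c ^+ 2 + s ^+ 2 - 1) * Cv by ring.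
  rewrite cs subrr mul0r subr0.
  have -> : (1 - c) * Sv + s * Cv = 0 by rewrite mulrBl mul1r {1}E1; ring.
  have -> : (1 - c) * Cv - s * Sv = 0 by rewrite mulrBl mul1r {1}E2; ring.
  by rewrite !mulr0 addr0.
by split; apply/eqP; [move: hS | move: hC] => /eqP; rewrite mulf_eq0 (negbTE hc).
Qed.

End CS.


Section Weighted.
Variables (R : realType) (n p : nat) (S : seq (n.-tuple nat)) (a b : n.-tuple nat -> R)
  (x : 'I_n -> R).
Hypothesis hp1 : (1 < p)%N.

Definition gpt (k : {ffun 'I_n -> 'I_p}) : 'I_n -> R :=
  fun j => x j + 1/2 + (k j)%:R / p%:R.
Definition th (al : n.-tuple nat) : R := 2 * pi * \sum_j (tnth al j)%:R * (x j + 1/2).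
Definition ai (al : n.-tuple nat) : 'I_n -> int := fun j => (tnth al j)%:Z.

Lemma gpt_expand al k :
  2 * pi * \sum_(i < n) (tnth al i)%:R * gpt k i = th al + Ang R n p (ai al) k.
Proof.
rewrite /th /Ang -mulrDr -big_split /=; congr (_ * _); apply: eq_bigr => j _.
by rewrite /ai /gpt -pmulrn; ring.
Qed.

Lemma Ang_add be be' k :
  Ang R n p (fun j => be j + be' j) k = Ang R n p be k + Ang R n p be' k.
Proof.
rewrite /Ang -mulrDr -big_split /=; congr (_ * _); apply: eq_bigr => j _.
by rewrite rmorphD /=; ring.
Qed.

Lemma Ang_sub be be' k :
  Ang R n p (fun j => be j - be' j) k = Ang R n p be k - Ang R n p be' k.
Proof.
rewrite /Ang -mulrBr -sumrB /=; congr (_ * _); apply: eq_bigr => j _.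
by rewrite rmorphB /=; ring.
Qed.

Lemma trig_gpt k : trig_poly S a b (gpt k) =
  \sum_(al <- S) (a al * cos (th al + Ang R n p (ai al) k) + b al * sin (th al + Ang R n p (ai al) k)).
Proof. by apply: eq_bigr => al _; rewrite !gpt_expand. Qed.

Lemma prod_expand (A B X ps : R) :
  (1 - cos ps) * (A * cos X + B * sin X) =
  A * cos X + B * sin X - A / 2 * cos (X + ps) - A / 2 * cos (X - ps)
  - B / 2 * sin (X + ps) - B / 2 * sin (X - ps).
Proof. rewrite !cosD !sinD cosN sinN; by field. Qed.

Lemma weighted (ga : 'I_n -> int)
  (hS : forall al, al \in S ->
     [/\ exists i, ~~ (p%:Z %| ai al i)%Z,
         exists i, ~~ (p%:Z %| ai al i + ga i)%Z &
         exists i, ~~ (p%:Z %| ai al i - ga i)%Z]) :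
  \sum_(k : {ffun 'I_n -> 'I_p}) (1 - cos (Ang R n p ga k)) * trig_poly S a b (gpt k) = 0.
Proof.
under eq_bigr => k _ do rewrite trig_gpt mulr_sumr.
rewrite exchange_big /= big_seq big1 // => al /hS [[i1 h1] [i2 h2] [i3 h3]].
have e : forall k, (1 - cos (Ang R n p ga k)) *
   (a al * cos (th al + Ang R n p (ai al) k) + b al * sin (th al + Ang R n p (ai al) k)) =
   a al * cos (th al + Ang R n p (ai al) k) + b al * sin (th al + Ang R n p (ai al) k)
   - a al / 2 * cos (th al + Ang R n p (fun j => ai al j + ga j) k)
   - a al / 2 * cos (th al + Ang R n p (fun j => ai al j - ga j) k)
   - b al / 2 * sin (th al + Ang R n p (fun j => ai al j + ga j) k)
   - b al / 2 * sin (th al + Ang R n p (fun j => ai al j - ga j) k).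
  by move=> k; rewrite prod_expand Ang_add Ang_sub !addrA.
under eq_bigr => k _ do rewrite e.
rewrite !sumrB big_split /= -!mulr_sumr.
have [c1 s1] := @CS R n p hp1 (ai al) i1 h1 (th al).
have [c2 s2] := @CS R n p hp1 (fun j => ai al j + ga j) i2 h2 (th al).
have [c3 s3] := @CS R n p hp1 (fun j => ai al j - ga j) i3 h3 (th al).
rewrite c1 s1 c2 s2 c3 s3; ring.
Qed.

End Weighted.


Lemma sign_lem (R : realType) (T : finType) (k0 : T) (w G : T -> R) :
  (forall k, 0 <= w k) -> w k0 = 0 -> \sum_k w k != 0 -> \sum_k w k * G k = 0 ->
  exists k, k != k0 /\ G k <= 0.
Proof.
move=> w0 wk0 sw sG.
case: (pickP (fun k => (k != k0) && (G k <= 0))) => [k /andP [h1 h2] | none].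
  by exists k.
have pos : forall k, k != k0 -> 0 < G k.
  by move=> k hk; have := none k; rewrite hk /= => /negbT; rewrite -ltNge.
have ge : forall k, true -> 0 <= w k * G k.
  move=> k _; have [->|hk] := eqVneq k k0; first by rewrite wk0 mul0r.
  by rewrite mulr_ge0 // ltW // pos.
have z := psumr_eq0P ge sG.
case/negP: sw; apply/eqP; apply: big1 => k _.
have [->|hk] := eqVneq k k0; first by [].
have := z k isT; move/eqP; rewrite mulf_eq0 => /orP [/eqP //|].
by rewrite gt_eqF // pos.
Qed.

Section Dist.
Variable R : realType.

Definition redn (t : R) : nat := if t < 1 then 0%N else if t < 2 then 1%N else 2%N.
Definition red (t : R) : R := t - (redn t)%:R.

Lemma red_fd t : 0 <= t -> t < 3 -> 0 <= red t /\ red t < 1.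
Proof.
move=> h1 h2; rewrite /red /redn.
case: ifP => a1; first by rewrite subr0; lra.
case: ifP => a2; move: a1 a2 => /negbT; rewrite -leNgt => a1 a2.
  split; lra.
move/negbT: a2; rewrite -leNgt => a2; split; lra.
Qed.

Lemma min_bound (d e : R) :
  [\/ -e <= d <= e, d <= -(1 - e) | 1 - e <= d] -> Num.min `|d| (1 - `|d|) <= e.
Proof.
case=> [h|h|h]; rewrite ge_min.
- by rewrite ler_norml h.
- apply/orP; right; have : 1 - e <= `|d| by rewrite ler_normr; apply/orP; right; lra.
  lra.
- apply/orP; right; have : 1 - e <= `|d| by rewrite ler_normr h.
  lra.
Qed.

Lemma min_half (d : R) : -1 <= d <= 1 ->
  0 <= Num.min `|d| (1 - `|d|) /\ Num.min `|d| (1 - `|d|) <= 1/2.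
Proof.
move=> hd; have h1 : `|d| <= 1 by rewrite ler_norml.
split.
  by rewrite le_min normr_ge0 /=; lra.
rewrite ge_min; case: (lerP `|d| (1/2)) => h //=; apply/idP; lra.
Qed.

Lemma coord_bound (xj vj pr : R) : 0 <= xj < 1 -> 0 <= vj < 1 ->
  let c := Num.min `|xj - red (xj + 1/2 + vj)| (1 - `|xj - red (xj + 1/2 + vj)|) in
  [/\ 0 <= c, c <= 1/2 & (pr <= vj <= 1 - pr -> c <= 1/2 - pr)].
Proof.
move=> hx hv c.
have [r0 r1] : 0 <= red (xj + 1/2 + vj) /\ red (xj + 1/2 + vj) < 1 by apply: red_fd; lra.
have [c0 c1] : 0 <= c /\ c <= 1/2 by apply: min_half; lra.
split => // hp; apply: min_bound.
move: r0 r1; rewrite /red /redn.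
case: ifP => a1; first by rewrite subr0 => _ _; constructor 2; lra.
case: ifP => a2; move: a1 a2 => /negbT; rewrite -leNgt => a1 a2 r0 r1.
  by constructor 1; lra.
by constructor 3; lra.
Qed.

End Dist.
Arguments red {R} t.
Arguments redn {R} t.
Arguments coord_bound {R xj vj} pr.


Section Ball.
Variables (R : realType) (n : nat).

Lemma trig_shift (S : seq (n.-tuple nat)) (a b : n.-tuple nat -> R) (m : 'I_n -> nat) (u : 'I_n -> R) :
  trig_poly S a b (fun j => u j - (m j)%:R) = trig_poly S a b u.
Proof.
apply: eq_bigr => al _.
set N := (\sum_(i < n) (tnth al i * m i))%N.
have e : \sum_(i < n) (tnth al i)%:R * (u i - (m i)%:R) =
   \sum_(i < n) (tnth al i)%:R * u i - N%:R :> R.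
  rewrite /N natr_sum -sumrB; apply: eq_bigr => i _; rewrite natrM; ring.
rewrite e.
have -> : 2 * pi * (\sum_(i < n) (tnth al i)%:R * u i - N%:R) =
   2 * pi * \sum_(i < n) (tnth al i)%:R * u i + (- (N%:Z))%:~R * (2 * pi) :> R.
  by rewrite mulrNz -pmulrn; ring.
by rewrite cos_int sin_int.
Qed.

Lemma ball_lem (p : nat) (x v : 'I_n -> R) (i : 'I_n) :
  (2 <= p)%N -> in_fund_domain x -> (forall j, 0 <= v j < 1) ->
  1 / p%:R <= v i <= 1 - 1 / p%:R ->
  let y := fun j => red (x j + 1/2 + v j) in
  [/\ in_fund_domain y,
      torus_dist x y <= Num.sqrt ((n%:R - 1) / 4 + ((p%:R - 2) / (2 * p%:R)) ^+ 2)
    & forall S (a b : n.-tuple nat -> R),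
       trig_poly S a b y = trig_poly S a b (fun j => x j + 1/2 + v j)].
Proof.
move=> hp hx hv hvi y.
have hxb : forall j, 0 <= x j < 1 by move=> j; have [h1 h2] := hx j; rewrite h1 h2.
split.
- move=> j; have := hx j; have := hv j => h1 h2.
  have [] := @red_fd R (x j + 1/2 + v j); try lra.
  by move=> r0 r1; split.
- rewrite /torus_dist ler_sqrt; last first.
    have : (1 <= n)%N by apply: leq_ltn_trans (ltn_ord i).
    rewrite -(ler_nat R) => h1; apply: addr_ge0; last exact: sqr_ge0.
    lra.
  have p2 : (2 <= p%:R :> R) by rewrite (ler_nat R 2).
  have -> : (p%:R - 2) / (2 * p%:R) = 1/2 - 1/p%:R :> R by field; lra.
  rewrite (bigD1 i) //= [X in _ <= X]addrC /y.
  have [c0 c1 c2] := coord_bound (1/p%:R) (hxb i) (hv i).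
  have ci := c2 hvi.
  apply: lerD.
    by rewrite ler_sqr ?nnegrE //; lra.
  apply: (@le_trans _ _ (\sum_(j < n | j != i) (1/4 : R))).
    apply: ler_sum => j _.
    have [d0 d1 _] := coord_bound (1/p%:R) (hxb j) (hv j).
    have -> : (1/4 : R) = (1/2) ^+ 2 by rewrite expr2; field.
    by rewrite ler_sqr ?nnegrE //; lra.
  have e : \sum_(j < n) (1/4:R) = 1/4 + \sum_(j < n | j != i) 1/4 by rewrite (bigD1 i).
  have e2 : \sum_(j < n) (1/4:R) = n%:R * (1/4) by rewrite sumr_const card_ord mulr_natl.
  lra.
- move=> S a b; exact: (trig_shift S a b (fun j => redn (x j + 1/2 + v j))).
Qed.
End Ball.


Section C.
Variable R : realType.
Lemma cont_sum (I : Type) (r : seq I) (F : I -> R -> R) :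
  (forall k, continuous (F k)) -> continuous (fun s => \sum_(k <- r) F k s).
Proof.
move=> hF; elim: r => [|k r ih].
  under eq_fun => s do rewrite big_nil. exact: cst_continuous.
under eq_fun => s do rewrite big_cons.
move=> s; apply: (@continuousD _ _ _ (F k) (fun s => \sum_(k <- r) F k s)); [exact: hF | exact: ih].
Qed.
Lemma cont_add (f g : R -> R) : continuous f -> continuous g -> continuous (fun s => f s + g s).
Proof. by move=> hf hg s; exact: (continuousD (hf s) (hg s)). Qed.
Lemma cont_mul (f g : R -> R) : continuous f -> continuous g -> continuous (fun s => f s * g s).
Proof. by move=> hf hg s; exact: (continuousM (hf s) (hg s)). Qed.
Lemma cont_cos (f : R -> R) : continuous f -> continuous (fun s => cos (f s)).
Proof. move=> hf s; apply: (@continuous_comp _ _ _ f cos); [exact: hf | exact: continuous_cos]. Qed.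
Lemma cont_sin (f : R -> R) : continuous f -> continuous (fun s => sin (f s)).
Proof. move=> hf s; apply: (@continuous_comp _ _ _ f sin); [exact: hf | exact: continuous_sin]. Qed.
Lemma cont_id : continuous (fun s : R => s).
Proof. by move=> s; apply: cvg_id. Qed.
Lemma cont_cst (c : R) : continuous (fun s : R => c).
Proof. exact: cst_continuous. Qed.

Lemma convex_le (lo hi p q c : R) : lo <= p <= hi -> lo <= q <= hi -> 0 <= c <= 1 ->
  lo <= p + c * (q - p) <= hi.
Proof.
move=> /andP [h1 h2] /andP [h3 h4] /andP [h5 h6].
have e1 : 0 <= (1 - c) * (p - lo) by apply: mulr_ge0; lra.
have e2 : 0 <= c * (q - lo) by apply: mulr_ge0; lra.
have e3 : 0 <= (1 - c) * (hi - p) by apply: mulr_ge0; lra.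
have e4 : 0 <= c * (hi - q) by apply: mulr_ge0; lra.
apply/andP; split; nra.
Qed.

Lemma convex_lt (p q c : R) : 0 <= p < 1 -> 0 <= q < 1 -> 0 <= c <= 1 ->
  0 <= p + c * (q - p) < 1.
Proof.
move=> /andP [h1 h2] /andP [h3 h4] /andP [h5 h6].
have e1 : 0 <= (1 - c) * p by apply: mulr_ge0; lra.
have e2 : 0 <= c * q by apply: mulr_ge0; lra.
have e3 : 0 <= (1 - c) * (1 - p) by apply: mulr_ge0; lra.
have e4 : 0 <= c * (1 - q) by apply: mulr_ge0; lra.
have [c0|c0] := eqVneq c 0.
  by rewrite c0 mul0r addr0; apply/andP; split.
have e5 : 0 < c * (1 - q) by apply: mulr_gt0; lra.
apply/andP; split; nra.
Qed.

Variables (n : nat) (S : seq (n.-tuple nat)) (a b : n.-tuple nat -> R) (x : 'I_n -> R).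

Definition Gf (u : 'I_n -> R) := trig_poly S a b (fun j => x j + 1/2 + u j).

Lemma G_cont (v w : 'I_n -> R) : continuous (fun s : R => Gf (fun j => v j + s * w j)).
Proof.
rewrite /Gf /trig_poly; apply: cont_sum => al.
have L : continuous (fun s : R => 2 * pi * \sum_(i < n) (tnth al i)%:R * (x i + 1/2 + (v i + s * w i))).
  apply: cont_mul; first exact: cont_cst.
  apply: cont_sum => j; apply: cont_mul; first exact: cont_cst.
  apply: cont_add; first exact: cont_cst.
  apply: cont_add; first exact: cont_cst.
  apply: cont_mul; [exact: cont_id | exact: cont_cst].
apply: cont_add; apply: cont_mul; try exact: cont_cst.
  exact: cont_cos.
exact: cont_sin.
Qed.

Lemma seg_lem (v v' : 'I_n -> R) (i : 'I_n) (lo hi : R) :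
  (forall j, 0 <= v j < 1) -> (forall j, 0 <= v' j < 1) ->
  lo <= v i <= hi -> lo <= v' i <= hi ->
  Num.min (Gf v) (Gf v') <= 0 <= Num.max (Gf v) (Gf v') ->
  exists u, [/\ forall j, 0 <= u j < 1, lo <= u i <= hi & Gf u = 0].
Proof.
move=> hv hv' hvi hvi' hG.
pose w j := v' j - v j.
pose h s := Gf (fun j => v j + s * w j).
have h0 : h 0 = Gf v.
  by rewrite /h; congr Gf; apply/funext => j; rewrite mul0r addr0.
have h1 : h 1 = Gf v'.
  by rewrite /h; congr Gf; apply/funext => j; rewrite mul1r /w addrC subrK.
have hG' : Num.min (h 0) (h 1) <= 0 <= Num.max (h 0) (h 1) by rewrite h0 h1.
case: (@IVT R h 0 1 0 ler01 _ hG') => [|c hc hz].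
  by apply: continuous_subspaceT; exact: G_cont.
have c01 : 0 <= c <= 1 by move: hc; rewrite in_itv.
exists (fun j => v j + c * w j); split => //.
- by move=> j; apply: convex_lt.
- exact: convex_le.
Qed.

End C.


Theorem theorem1p2 (R : realType) (n p : nat) (S : seq (n.-tuple nat))
  (hn : (1 <= n)%N) (hp : prime p) (hp3 : (3 <= p)%N)
  (huniq : uniq S)
  (hS0 : forall alpha, alpha \in S -> alpha != [tuple of nseq n 0%N])
  (hSp : forall alpha, alpha \in S -> exists i : 'I_n, ~~ (p %| tnth alpha i)%N)
  (hcard : (size S)%:R <= (p%:R ^+ n) / 2 - 1 :> R)
  (a b : n.-tuple nat -> R) (x : 'I_n -> R) (hx : in_fund_domain x) :
  let r : R := Num.sqrt ((n%:R - 1) / 4 + ((p%:R - 2) / (2 * p%:R)) ^+ 2) in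
  exists y : 'I_n -> R,
    [/\ in_fund_domain y, torus_dist x y <= r & trig_poly S a b y = 0].
Proof.
move=> r.
have hp1 : (1 < p)%N by apply: leq_trans hp3.
have hp2 : (2 <= p)%N by apply: leq_trans hp3.
have p0 : (0 < p)%N by apply: leq_trans hp3.
have pR : (0 < p%:R :> R) by rewrite ltr0n.
have hc : (2 * size S + 2 <= p ^ n)%N.
  rewrite -(ler_nat R) natrD natrM natrX.
  have : (size S)%:R * 2 + 2 <= p%:R ^+ n :> R by lra.
  by rewrite mulrC.
have [g [hg0 hgS]] := @exists_gamma n p S hp1 hc.
pose ga : 'I_n -> int := fun j => (g j)%:Z.
have hW := @weighted R n p S a b x hp1 ga (fun al hal =>
  And3 (hSp al hal) (hgS al hal).1 (hgS al hal).2).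
pose w k := 1 - cos (Ang R n p ga k).
pose F (k : {ffun 'I_n -> 'I_p}) := trig_poly S a b (gpt R n p x k).
have w0 : forall k, 0 <= w k by move=> k; rewrite /w subr_ge0 cos_le1.
pose k0 : {ffun 'I_n -> 'I_p} := [ffun j => Ordinal p0].
have wk0 : w k0 = 0.
  rewrite /w /Ang big1 ?mulr0 ?cos0 ?subrr // => j _.
  by rewrite ffunE /= mul0r mulr0.
have sw : \sum_k w k != 0.
  rewrite /w sumrB sumr_const card_ffun !card_ord.
  have [hi0 hi] := hg0.
  have [c _] := @CS R n p hp1 ga hi0 hi 0.
  under eq_bigr => k _ do rewrite -[Ang R n p ga k]add0r.
  rewrite c subr0 -mulr_natl mulr1 pnatr_eq0 expn_eq0 negb_and.
  by rewrite gt_eqF.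
have [k2 [k20 F2]] := @sign_lem R _ k0 w F w0 wk0 sw hW.
have [k1 [k10 F1]] : exists k, k != k0 /\ - F k <= 0.
  apply: (@sign_lem R _ k0 w (fun k => - F k) w0 wk0 sw).
  by under eq_bigr => k _ do rewrite mulrN; rewrite sumrN hW oppr0.
pose q : R := 1 / p%:R.
have q0 : 0 < q by rewrite /q divr_gt0.
have qp : q * p%:R = 1 by rewrite /q mul1r mulVf // gt_eqF.
pose kv (k : {ffun 'I_n -> 'I_p}) : 'I_n -> R := fun j => (k j)%:R / p%:R.
have kvq : forall k j, kv k j = (k j)%:R * q by move=> k j; rewrite /kv /q mul1r.
have kv01 : forall k j, 0 <= kv k j < 1.
  move=> k j; rewrite kvq.
  have h1 : ((k j).+1%:R <= p%:R :> R) by rewrite ler_nat ltn_ord.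
  rewrite -natr1 in h1.
  have h0 : (0 <= (k j)%:R :> R) by rewrite ler0n.
  apply/andP; split; nra.
have kvi : forall k, k != k0 -> exists i, 1 / p%:R <= kv k i <= 1 - 1 / p%:R.
  move=> k hk.
  case: (pickP (fun i => (k i : nat) != 0%N)) => [i hi|none]; last first.
    exfalso; apply: (negP hk); apply/eqP/ffunP => i; rewrite ffunE; apply: val_inj => /=.
    by have := none i; move/negbFE/eqP.
  exists i; rewrite -/q kvq.
  have h1 : ((k i).+1%:R <= p%:R :> R) by rewrite ler_nat ltn_ord.
  rewrite -natr1 in h1.
  have h0 : (1 <= (k i)%:R :> R) by rewrite ler1n lt0n.
  apply/andP; split; nra.
have [i1 hi1] := kvi k1 k10.
have [i2 hi2] := kvi k2 k20.
pose wv j := if j == i2 then kv k2 j else kv k1 j.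
have wv01 : forall j, 0 <= wv j < 1 by move=> j; rewrite /wv; case: ifP.
have wvi1 : 1 / p%:R <= wv i1 <= 1 - 1 / p%:R by rewrite /wv; case: eqP => [->|].
have wvi2 : wv i2 = kv k2 i2 by rewrite /wv eqxx.
have [u [i [hu01 hui hu0]]] : exists u i, [/\ forall j, 0 <= u j < 1,
     1 / p%:R <= u i <= 1 - 1 / p%:R & Gf R n S a b x u = 0].
  case: (lerP 0 (Gf R n S a b x wv)) => hw.
  - have [u [h1 h2 h3]] := @seg_lem R n S a b x (kv k2) wv i2 (1 / p%:R) (1 - 1 / p%:R)
       (kv01 k2) wv01 hi2 ltac:(by rewrite wvi2) ltac:(by rewrite ge_min le_max; apply/andP; split; apply/orP; [left|right]).
    by exists u, i2.
  - have F1' : 0 <= F k1 by lra.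
    have [u [h1 h2 h3]] := @seg_lem R n S a b x (kv k1) wv i1 (1 / p%:R) (1 - 1 / p%:R)
       (kv01 k1) wv01 hi1 wvi1 ltac:(by rewrite ge_min le_max; apply/andP; split; apply/orP; [right|left]; rewrite // ltW).
    by exists u, i1.
have [y1 y2 y3] := @ball_lem R n p x u i hp2 hx hu01 hui.
eexists; split; [exact: y1 | exact: y2 | by rewrite y3].
Qed.
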